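(* Let $\alpha\ge1$. If $P_1,P_2\in\hat E_+$ satisfy the condition $A_\alpha$ for orders $(k_1,l_1)$ and $(k_2,l_2)$ respectively, then $P_1P_2$ satisfies $A_\alpha$ for order $(k_1+k_2,l_1+l_2)$. In particular, if $P_1,P_2$ satisfy $A_\alpha$, then $P_1P_2$ satisfies $A_\alpha$ and $\mathrm{ord}_\Gamma(P_1P_2)=\mathrm{ord}_\Gamma(P_1)+\mathrm{ord}_\Gamma(P_2)$. The same statements hold for $P_1,P_2\in E_+$ with the strong condition $B_\alpha$ in place of $A_\alpha$.
   Context: $k$ is a field of characteristic zero, $R=k[[x_1,x_2]]$, $M=(x_1,x_2)$, $\mathrm{ord}_M(a)=\sup\{n:a\in M^n\}$, $\partial_i=\partial/\partial x_i$. $\hat D_1$: formal series $\sum_{q\ge0}a_q\partial_1^q$, $a_q\in R$, $\mathrm{ord}_M(a_q)\to\infty$; $\hat E_+=\hat D_1((\partial_2^{-1}))$ (Laurent series in $\partial_2^{-1}$, coefficients on the left, Leibniz-rule multiplication); $E_+=R[\partial_1]((\partial_2^{-1}))$. Every $P\in\hat E_+$ is uniquely $P=\sum p_{ij}\partial_1^i\partial_2^j$, $p_{ij}\in R$. $P$ has $\Gamma$-order $\mathrm{ord}_\Gamma(P)=(k,l)$ if $P=\sum_{s\le l}p_s\partial_2^s$ with $p_s\in\hat D_1$, $p_l\in R[\partial_1]$ of $\partial_1$-order $k$. $P$ satisfies $A_\alpha$ for order $(k,l)$ if $\mathrm{ord}_M(p_{ij})\ge i-\alpha(l-j)-k$ whenever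 $i>\alpha(l-j)+k$; $P$ satisfies $A_\alpha$ if it does so for $(k,l)=\mathrm{ord}_\Gamma(P)$. $P\in E_+$ satisfies the strong condition $B_\alpha$ for order $(k,l)$ if $p_{ij}=0$ whenever $i>\alpha(l-j)+k$, and $B_\alpha$ if this holds for $(k,l)=\mathrm{ord}_\Gamma(P)$. *)

(* Defs.v *)
From Stdlib Require Import Reals ClassicalEpsilon.
From HB Require Import structures.
From mathcomp Require Import all_boot all_order all_algebra.
Set Implicit Arguments. Unset Strict Implicit. Unset Printing Implicit Defensive.
Import GRing.Theory.
Local Open Scope ring_scope.

Section Defs.
Variable K : fieldType.

(* R = K[[x1,x2]] : c a b = coefficient of x1^a x2^b. *)
Definition PS := nat -> nat -> K.
Definition zeroPS (c : PS) : Prop := forall a b, c a b = 0.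

(* ord_M(c) >= x  (x real):  c in M^n for every integer n < x, i.e. every
   monomial of total degree d < x has coefficient 0. *)
Definition ordM_ge (c : PS) (x : R) : Prop :=
  forall a b : nat, Rlt (INR (a + b)%N) x -> c a b = 0.

(* An operator P = sum_{i in N, j in Z} p i j d1^i d2^j, p i j in R. *)
Definition Op := nat -> int -> PS.

(* membership in \hat E_+ = \hat D_1((d2^-1)) *)
Definition inEhat (p : Op) : Prop :=
  (exists L : int, forall i j, L < j -> zeroPS (p i j)) /\
  (forall (j : int) (d : nat), exists N : nat, forall i, (N <= i)%N ->
      forall a b : nat, (a + b < d)%N -> p i j a b = 0).

(* membership in E_+ = R[d1]((d2^-1)) *)
Definition inEplus (p : Op) : Prop :=
  (exists L : int, forall i j, L < j -> zeroPS (p i j)) /\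
  (forall j : int, exists N : nat, forall i, (N <= i)%N -> zeroPS (p i j)).

(* Sum of a finitely supported family indexed by nat (0 if not finitely
   supported; only used on finitely supported families). *)
Definition fsum (f : nat -> K) : K :=
  match excluded_middle_informative
          (exists N : nat, forall n, (N <= n)%N -> f n = 0) with
  | left H => \sum_(n < proj1_sig (constructive_indefinite_description _ H)) f n
  | right _ => 0
  end.

Definition fsumZ (f : int -> K) : K :=
  fsum (fun n => f (Posz n)) + fsum (fun n => f (Negz n)).

(* generalized binomial coefficient binom(j, t), j in Z (char 0) *)
Definition gbin (j : int) (t : nat) : K :=
  (\prod_(u < t) (j%:~R - u%:R)) / (t`!)%:R.

(* d1^s d2^t applied to a power series c *)
Definition dpart (s t : nat) (c : PS) : PS :=
  fun a b => c (a + s)%N (b + t)%N * ((a + s) ^_ s)%:R * ((b + t) ^_ t)%:R.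

(* Product in \hat E_+ via the Leibniz rule:
   (p1 d1^i d2^j)(p2 d1^i' d2^j') =
     sum_{s<=i, t>=0} C(i,s) C(j,t) p1 (d1^s d2^t p2) d1^(i-s+i') d2^(j-t+j').
   Coefficient of d1^I d2^J, at monomial x1^a x2^b. *)
Definition opmul (p1 p2 : Op) : Op :=
  fun I J a b =>
    fsumZ (fun j => fsum (fun t => fsum (fun i =>
      \sum_(s < i.+1 | (i - s <= I)%N)
        \sum_(a1 < a.+1) \sum_(b1 < b.+1)
          p1 i j a1 b1 * ('C(i, s))%:R * gbin j t *
          dpart s t (p2 (I - (i - s))%N (J - j + t%:Z)) (a - a1)%N (b - b1)%N))).

Definition intR (z : int) : R :=
  match z with Posz n => INR n | Negz n => Ropp (INR n.+1) end.

Definition ordG (p : Op) (k : nat) (l : int) : Prop :=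
  (forall i j, l < j -> zeroPS (p i j)) /\
  (forall i, (k < i)%N -> zeroPS (p i l)) /\
  ~ zeroPS (p k l).

Definition condA (al : R) (p : Op) (k : nat) (l : int) : Prop :=
  forall (i : nat) (j : int),
    Rlt (Rplus (Rmult al (intR (l - j))) (INR k)) (INR i) ->
    ordM_ge (p i j) (Rminus (Rminus (INR i) (Rmult al (intR (l - j)))) (INR k)).

Definition condB (al : R) (p : Op) (k : nat) (l : int) : Prop :=
  forall (i : nat) (j : int),
    Rlt (Rplus (Rmult al (intR (l - j))) (INR k)) (INR i) -> zeroPS (p i j).

End Defs.

(* Main.v *)
Require Import Defs.
From Stdlib Require Import Reals.
From mathcomp Require Import all_boot all_order all_algebra.
From Stdlib Require Import Lra Classical ClassicalEpsilon.
From mathcomp Require Import zify ssrZ.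
Set Implicit Arguments. Unset Strict Implicit. Unset Printing Implicit Defensive.
Import Order.TTheory GRing.Theory Num.Theory.
Local Open Scope ring_scope.
Lemma intR_Z (z : int) : intR z = IZR (Z_of_int z).
Proof.
case: z => n /=; first by rewrite INR_IZR_INZ.
by rewrite opp_IZR -INR_IZR_INZ addn1.
Qed.

Section S.
Variable K : fieldType.

Lemma fsum_eq0 (f : nat -> K) : (forall n, f n = 0) -> fsum f = 0.
Proof.
move=> H; rewrite /fsum; case: excluded_middle_informative => // E.
by apply: big1 => i _; apply: H.
Qed.

Lemma fsumZ_eq0 (f : int -> K) : (forall n, f n = 0) -> fsumZ f = 0.
Proof. by move=> H; rewrite /fsumZ !fsum_eq0 ?addr0. Qed.

Lemma fsum_single (f : nat -> K) n0 : (forall n, n <> n0 -> f n = 0) -> fsum f = f n0.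
Proof.
move=> H; rewrite /fsum; case: excluded_middle_informative => E; last first.
  exfalso; apply: E; exists n0.+1 => n Hn; apply: H; lia.
case: (constructive_indefinite_description _ E) => N HN /=.
case: (ltnP n0 N) => Hn0.
  rewrite (bigD1 (Ordinal Hn0)) //= big1 ?addr0 // => i Hi; apply: H.
  move=> E'; move: Hi; rewrite -(inj_eq val_inj) /= E' eqxx //.
rewrite (HN _ Hn0) big1 // => i _; case: (eqVneq (val i) n0) => [E'|E'].
  by rewrite E' HN.
by apply: H; apply/eqP.
Qed.

Lemma fsumZ_single (f : int -> K) z0 : (forall z, z <> z0 -> f z = 0) -> fsumZ f = f z0.
Proof.
move=> H; rewrite /fsumZ; case: z0 H => n0 H.
  rewrite (fsum_single (n0:=n0)) ?fsum_eq0 ?addr0 // => n.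
    by apply: H.
  by move=> E; apply: H => -[] /E.
rewrite (fsum_single (n0:=n0) (f := fun n => f (Negz n))) ?fsum_eq0 ?add0r // => n.
  by apply: H.
by move=> E; apply: H => -[] /E.
Qed.
End S.
Lemma INR_addn m n : INR (m + n)%N = Rplus (INR m) (INR n).
Proof. exact: plus_INR. Qed.

Lemma arith_common (I i s t a b a1 b1 : nat) (l1 l2 j J : int) :
 (s <= i)%N -> (a1 <= a)%N -> (b1 <= b)%N -> (i - s <= I)%N ->
 [/\ Rplus (INR I) (INR s) = Rplus (INR i) (INR (I - (i - s))),
     Rplus (INR (a1 + b1)) (INR ((a - a1 + s) + (b - b1 + t))) = Rplus (Rplus (INR (a + b)) (INR s)) (INR t)
   & Rplus (Rplus (intR (l1 - j)) (intR (l2 - (J - j + t%:Z)))) (INR t) = intR (l1 + l2 - J)].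
Proof.
move=> H1 H2 H3 H4; split.
- have E : (I + s = i + (I - (i - s)))%N by lia.
  by have := f_equal INR E; rewrite !INR_addn.
- have E : (a1 + b1 + ((a - a1 + s) + (b - b1 + t)) = a + b + s + t)%N by lia.
  by have := f_equal INR E; rewrite !INR_addn.
- rewrite !intR_Z INR_IZR_INZ -!plus_IZR; congr IZR; lia.
Qed.

Lemma keyA (al : R) (hal : Rle R1 al) (I i s t a b a1 b1 k1 k2 : nat) (l1 l2 j J : int) :
 (s <= i)%N -> (a1 <= a)%N -> (b1 <= b)%N -> (i - s <= I)%N ->
 Rle (INR i) (Rplus (Rplus (Rmult al (intR (l1 - j))) (INR k1)) (INR (a1 + b1))) ->
 Rle (INR (I - (i - s))) (Rplus (Rplus (Rmult al (intR (l2 - (J - j + t%:Z)))) (INR k2))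
        (INR ((a - a1 + s) + (b - b1 + t)))) ->
 Rle (INR I) (Rplus (Rplus (Rmult al (intR (l1 + l2 - J))) (INR (k1 + k2))) (INR (a + b))).
Proof.
move=> H1 H2 H3 H4 B1 B2.
have [E1 E2 E3] := @arith_common I i s t a b a1 b1 l1 l2 j J H1 H2 H3 H4.
rewrite INR_addn.
have := pos_INR t; have := pos_INR s; have := pos_INR (a1 + b1).
have := pos_INR ((a - a1 + s) + (b - b1 + t)).
move: E1 E2 E3 B1 B2 hal.
set x1 := INR (a1 + b1); set x2 := INR (_ + _)%N.
move=> *; nra.
Qed.

Lemma keyB (al : R) (hal : Rle R1 al) (I i s t a b a1 b1 k1 k2 : nat) (l1 l2 j J : int) :
 (s <= i)%N -> (a1 <= a)%N -> (b1 <= b)%N -> (i - s <= I)%N ->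
 Rle (INR i) (Rplus (Rmult al (intR (l1 - j))) (INR k1)) ->
 Rle (INR (I - (i - s))) (Rplus (Rmult al (intR (l2 - (J - j + t%:Z)))) (INR k2)) ->
 Rle (INR I) (Rplus (Rmult al (intR (l1 + l2 - J))) (INR (k1 + k2))).
Proof.
move=> H1 H2 H3 H4 B1 B2.
have [E1 E2 E3] := @arith_common I i s t a b a1 b1 l1 l2 j J H1 H2 H3 H4.
rewrite INR_addn.
have := pos_INR t; have := pos_INR s.
move: E1 E3 B1 B2 hal => *; nra.
Qed.

Section S.
Variable K : fieldType.

Lemma condA_bound al (p : Op K) k l i j a1 b1 :
  condA al p k l -> p i j a1 b1 <> 0 ->
  Rle (INR i) (Rplus (Rplus (Rmult al (intR (l - j))) (INR k)) (INR (a1 + b1))).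
Proof.
move=> H Hn; have := pos_INR (a1 + b1).
case: (Rle_or_lt (INR i) (Rplus (Rmult al (intR (l - j))) (INR k))) => Hi.
  move=> *; lra.
case: (Rle_or_lt (Rminus (Rminus (INR i) (Rmult al (intR (l - j)))) (INR k)) (INR (a1 + b1))) => Hd.
  move=> *; lra.
by exfalso; apply: Hn; apply: (H i j Hi).
Qed.

Lemma condB_bound al (p : Op K) k l i j a1 b1 :
  condB al p k l -> p i j a1 b1 <> 0 ->
  Rle (INR i) (Rplus (Rmult al (intR (l - j))) (INR k)).
Proof.
move=> H Hn.
case: (Rle_or_lt (INR i) (Rplus (Rmult al (intR (l - j))) (INR k))) => Hi //.
by exfalso; apply: Hn; apply: (H i j Hi).
Qed.

Lemma opmul_eq0 (p1 p2 : Op K) I J a b :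
  (forall (j : int) (t i s a1 b1 : nat), (s <= i)%N -> (a1 <= a)%N -> (b1 <= b)%N -> (i - s <= I)%N ->
     p1 i j a1 b1 <> 0 ->
     p2 (I - (i - s))%N (J - j + t%:Z) (a - a1 + s)%N (b - b1 + t)%N <> 0 -> False) ->
  opmul p1 p2 I J a b = 0.
Proof.
move=> H; rewrite /opmul; apply: fsumZ_eq0 => j; apply: fsum_eq0 => t; apply: fsum_eq0 => i.
apply: big1 => s Hs; apply: big1 => a1 _; apply: big1 => b1 _.
rewrite /dpart.
case: (eqVneq (p1 i j a1 b1) 0) => [->|H1]; first by rewrite !mul0r.
case: (eqVneq (p2 (I - (i - s))%N (J - j + t%:Z) (a - a1 + s)%N (b - b1 + t)%N) 0) => [->|H2].
  by rewrite !(mul0r, mulr0).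
exfalso; apply: (H j t i s a1 b1) => //; try exact/eqP.
- by rewrite -ltnS.
- by rewrite -ltnS.
- by rewrite -ltnS.
Qed.
End S.
Section S.
Variable K : fieldType.

Lemma ordG_bound (p : Op K) k l i j x y : ordG p k l -> p i j x y <> 0 ->
  j <= l /\ (j = l -> (i <= k)%N).
Proof.
move=> [H1 [H2 H3]] Hn; split.
  by case: (leP j l) => // /H1 /(_ x y) //.
move=> E; subst j; case: (leqP i k) => // /H2 /(_ x y) //.
Qed.

Ltac kill := rewrite /dpart;
  match goal with |- ?x * _ * _ * (?y * _ * _) = 0 =>
    case: (eqVneq x 0) => [->|Hx]; [by rewrite !mul0r|];
    case: (eqVneq y 0) => [->|Hy]; [by rewrite !(mul0r,mulr0)|] end.

Lemma opmul_lead (p1 p2 : Op K) k1 k2 l1 l2 a b :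
  ordG p1 k1 l1 -> ordG p2 k2 l2 ->
  opmul p1 p2 (k1 + k2)%N (l1 + l2) a b =
  \sum_(a1 < a.+1) \sum_(b1 < b.+1) p1 k1 l1 a1 b1 * p2 k2 l2 (a - a1)%N (b - b1)%N.
Proof.
move=> O1 O2; rewrite /opmul (fsumZ_single (z0 := l1)); last first.
  move=> j Hj; apply: fsum_eq0 => t; apply: fsum_eq0 => i.
  apply: big1 => s Hs; apply: big1 => a1 _; apply: big1 => b1 _; kill.
  have [h1 _] := ordG_bound O1 (elimN eqP Hx).
  have [h2 _] := ordG_bound O2 (elimN eqP Hy).
  exfalso; lia.
rewrite (fsum_single (n0 := 0%N)); last first.
  move=> t Ht; apply: fsum_eq0 => i.
  apply: big1 => s Hs; apply: big1 => a1 _; apply: big1 => b1 _; kill.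
  have [h2 _] := ordG_bound O2 (elimN eqP Hy).
  exfalso; lia.
rewrite (fsum_single (n0 := k1)); last first.
  move=> i Hi.
  apply: big1 => s Hs; apply: big1 => a1 _; apply: big1 => b1 _; kill.
  have [_ h1] := ordG_bound O1 (elimN eqP Hx).
  have [_ h2] := ordG_bound O2 (elimN eqP Hy).
  have := h1 erefl; have : l1 + l2 - l1 + (Posz 0) = l2 by lia.
  move/h2 => h3 h4; have := ltn_ord s; exfalso; lia.
rewrite (bigD1 ord0) /=; last by lia.
rewrite addrC big1 ?add0r; last first.
  move=> s /andP [_ Hs]; apply: big1 => a1 _; apply: big1 => b1 _; kill.
  have [_ h2] := ordG_bound O2 (elimN eqP Hy).
  have h3 : (k1 + k2 - (k1 - s) <= k2)%N by apply: h2; lia.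
  have Hs' : (s : nat) != 0%N by move: Hs; apply: contra => /eqP E; apply/eqP/val_inj.
  have := ltn_ord s; move: Hs' => /eqP Hs'; move=> hs; exfalso; lia.
apply: eq_bigr => a1 _; apply: eq_bigr => b1 _.
rewrite bin0 /gbin big_ord0 fact0 divr1 /dpart !addn0 !ffactn0 !mulr1.
have -> : (k1 + k2 - (k1 - 0))%N = k2 by lia.
have -> : l1 + l2 - l1 + Posz 0 = l2 by lia.
by [].
Qed.
End S.
Lemma ex_min (P : nat -> Prop) : (exists n, P n) -> exists n, P n /\ forall m, (m < n)%N -> ~ P m.
Proof.
move=> [n Pn]; apply: NNPP => H.
have G : forall n m, (m <= n)%N -> ~ P m.
  elim=> [|n' IH] m Hm Pm.
    apply: H; exists m; split => // m' Hm'; lia.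
  case: (leqP m n') => Hmn; first exact: IH Hmn Pm.
  apply: H; exists m; split => // m' Hm'; apply: IH; lia.
exact: G (leqnn n) Pn.
Qed.

Section S.
Variable K : fieldType.

Lemma nz_ex (c : PS K) : ~ zeroPS c -> exists a, exists b, c a b <> 0.
Proof.
move=> Hc; apply: NNPP => N; apply: Hc => a b; apply: NNPP => H; apply: N; exists a; exists b; exact: H.
Qed.

Lemma ps_mul_neq0 (c d : PS K) : ~ zeroPS c -> ~ zeroPS d ->
  exists a b, \sum_(a1 < a.+1) \sum_(b1 < b.+1) c a1 b1 * d (a - a1)%N (b - b1)%N <> 0.
Proof.
move=> /nz_ex Hc /nz_ex Hd.
have [a0 [[b' Hb'] Ha0]] := ex_min Hc.
have [b0 [Hb0 Hb0m]] := ex_min (ex_intro (fun b => c a0 b <> 0) b' Hb').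
have [e0 [[f' Hf'] He0]] := ex_min Hd.
have [f0 [Hf0 Hf0m]] := ex_min (ex_intro (fun b => d e0 b <> 0) f' Hf').
exists (a0 + e0)%N, (b0 + f0)%N.
have ha : (a0 < (a0 + e0).+1)%N by lia.
have hb : (b0 < (b0 + f0).+1)%N by lia.
rewrite (bigD1 (Ordinal ha)) //= addrC big1 ?add0r; last first.
  move=> a1 Hne; have Hn : (a1 : nat) <> a0.
    by move=> E; move: Hne; rewrite (_ : a1 = Ordinal ha) ?eqxx ?andbF //; apply: val_inj.
  apply: big1 => b1 _.
  case: (ltngtP a1 a0) => H; last by [].
    have : c a1 b1 = 0 by apply: NNPP => N; apply: (Ha0 _ H); exists b1.
    by move=> ->; rewrite mul0r.
  have H' : (a0 + e0 - a1 < e0)%N by have := ltn_ord a1; lia.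
  have : d (a0 + e0 - a1)%N (b0 + f0 - b1)%N = 0.
    by apply: NNPP => N; apply: (He0 _ H'); eexists; exact: N.
  by move=> ->; rewrite mulr0.
rewrite (bigD1 (Ordinal hb)) //= addrC big1 ?add0r /=; last first.
  move=> b1 Hne; have Hn : (b1 : nat) <> b0.
    by move=> E; move: Hne; rewrite (_ : b1 = Ordinal hb) ?eqxx ?andbF //; apply: val_inj.
  case: (ltngtP b1 b0) => H; last by [].
    have : c a0 b1 = 0 by apply: NNPP => N; apply: (Hb0m _ H).
    by move=> ->; rewrite mul0r.
  have H' : (b0 + f0 - b1 < f0)%N by have := ltn_ord b1; lia.
  have : d (a0 + e0 - a0)%N (b0 + f0 - b1)%N = 0.
    by apply: NNPP => N; apply: (Hf0m _ H'); rewrite addKn in N.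
  by move=> ->; rewrite mulr0.
rewrite !addKn; apply/eqP; rewrite mulf_neq0 //; apply/eqP => //.
Qed.
End S.

Theorem lemma9 (K : fieldType) (charK0 : [pchar K] =i pred0)
  (al : R) (hal : Rle R1 al) :
  (forall (P1 P2 : Op K) (k1 k2 : nat) (l1 l2 : int),
      inEhat P1 -> inEhat P2 ->
      condA al P1 k1 l1 -> condA al P2 k2 l2 ->
      condA al (opmul P1 P2) (k1 + k2)%N (l1 + l2)) /\
  (forall (P1 P2 : Op K) (k1 k2 : nat) (l1 l2 : int),
      inEhat P1 -> inEhat P2 ->
      ordG P1 k1 l1 -> condA al P1 k1 l1 ->
      ordG P2 k2 l2 -> condA al P2 k2 l2 ->
      ordG (opmul P1 P2) (k1 + k2)%N (l1 + l2) /\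
      condA al (opmul P1 P2) (k1 + k2)%N (l1 + l2)) /\
  (forall (P1 P2 : Op K) (k1 k2 : nat) (l1 l2 : int),
      inEplus P1 -> inEplus P2 ->
      condB al P1 k1 l1 -> condB al P2 k2 l2 ->
      condB al (opmul P1 P2) (k1 + k2)%N (l1 + l2)) /\
  (forall (P1 P2 : Op K) (k1 k2 : nat) (l1 l2 : int),
      inEplus P1 -> inEplus P2 ->
      ordG P1 k1 l1 -> condB al P1 k1 l1 ->
      ordG P2 k2 l2 -> condB al P2 k2 l2 ->
      ordG (opmul P1 P2) (k1 + k2)%N (l1 + l2) /\
      condB al (opmul P1 P2) (k1 + k2)%N (l1 + l2)).
Proof.
have PA : forall (P1 P2 : Op K) (k1 k2 : nat) (l1 l2 : int),
      condA al P1 k1 l1 -> condA al P2 k2 l2 ->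
      condA al (opmul P1 P2) (k1 + k2)%N (l1 + l2).
  move=> P1 P2 k1 k2 l1 l2 A1 A2 I J HI a b Hab.
  apply: opmul_eq0 => j t i s a1 b1 H1 H2 H3 H4 N1 N2.
  have B1 := condA_bound A1 N1; have B2 := condA_bound A2 N2.
  have KK := @keyA al hal I i s t a b a1 b1 k1 k2 l1 l2 j J H1 H2 H3 H4 B1 B2.
  move: Hab KK; rewrite INR_addn => *; lra.
have PB : forall (P1 P2 : Op K) (k1 k2 : nat) (l1 l2 : int),
      condB al P1 k1 l1 -> condB al P2 k2 l2 ->
      condB al (opmul P1 P2) (k1 + k2)%N (l1 + l2).
  move=> P1 P2 k1 k2 l1 l2 A1 A2 I J HI a b.
  apply: opmul_eq0 => j t i s a1 b1 H1 H2 H3 H4 N1 N2.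
  have B1 := condB_bound A1 N1; have B2 := condB_bound A2 N2.
  have KK := @keyB al hal I i s t a b a1 b1 k1 k2 l1 l2 j J H1 H2 H3 H4 B1 B2.
  move: HI KK => *; lra.
have PO : forall (P1 P2 : Op K) (k1 k2 : nat) (l1 l2 : int),
      ordG P1 k1 l1 -> ordG P2 k2 l2 -> ordG (opmul P1 P2) (k1 + k2)%N (l1 + l2).
  move=> P1 P2 k1 k2 l1 l2 O1 O2; split; [|split].
  - move=> I J HJ a b; apply: opmul_eq0 => j t i s a1 b1 _ _ _ _ N1 N2.
    have [h1 _] := ordG_bound O1 N1; have [h2 _] := ordG_bound O2 N2; lia.
  - move=> I HI a b; apply: opmul_eq0 => j t i s a1 b1 H1 _ _ H4 N1 N2.
    have [h1 h1'] := ordG_bound O1 N1; have [h2 h2'] := ordG_bound O2 N2.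
    have ej : j = l1 by lia.
    have h3 := h1' ej.
    have h4 : (I - (i - s) <= k2)%N by apply: h2'; lia.
    lia.
  - move=> Z.
    have [a [b Hab]] := ps_mul_neq0 O1.2.2 O2.2.2.
    by apply: Hab; rewrite -opmul_lead //; apply: Z.
split; first by move=> *; apply: PA.
split; first by move=> *; split; [apply: PO | apply: PA].
split; first by move=> *; apply: PB.
by move=> *; split; [apply: PO | apply: PB].
Qed.
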